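(* In the standing setup (see context), let $\mathcal L$ be a $\mathrm{Gal}(k^{\mathrm{sep}}/k)$-stable subgroup of $(k^{\mathrm{sep}})^\times$. (1) For every $n\in\mathbb Z$, $C^{(\mathcal L)}_{\mathbf V}(\gamma)\subseteq C^{(\mathcal L^n)}_{\mathbf V}(\gamma^n)$ and $C^{(\mathcal L)}_{\mathbf G}(\gamma)\subseteq C^{(\mathcal L^n)}_{\mathbf G}(\gamma^n)$, where $\mathcal L^n=\{x^n:x\in\mathcal L\}$; if $\mu_n(k^{\mathrm{sep}})\subseteq\mathcal L$, both containments are equalities. (2) If the automorphism of $\mathbf G$ induced by $\gamma$ has finite order $N$, and $n\in\mathbb Z$ satisfies $\mu_N(k^{\mathrm{sep}})\cap\mathcal L\subseteq\mu_n(k^{\mathrm{sep}})\subseteq\mathcal L$, then $\mathrm{Cent}_{\mathbf G}(\gamma^n)=C^{(\mathcal L)}_{\mathbf G}(\gamma)$.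
   Context: Standing setup: $k$ a field with separable closure $k^{\mathrm{sep}}$; $\mathbf G$ an affine algebraic group over $k$ (not necessarily smooth or connected) with a faithful finite-dimensional representation $\mathbf G\to\mathrm{GL}(\mathbf V)$; $\gamma\in N_{\mathrm{GL}(V)}(\mathbf G)(k)$ semisimple and diagonalisable over $k^{\mathrm{sep}}$ ($\gamma$ need not lie in $G$). For a subgroup $\mathcal L$ of $(k^{\mathrm{sep}})^\times$ and $\lambda\in(k^{\mathrm{sep}})^\times$, the $\mathcal L$-close $\lambda$-eigenspace of $\gamma$ in a $k^{\mathrm{sep}}$-vector space on which it acts diagonalisably is the sum of eigenspaces with eigenvalues in $\lambda\mathcal L$; $C^{(\mathcal L)}_{\mathbf W}(\gamma)$ is the $\mathcal L$-close $1$-eigenspace. $C^{(\mathcal L)}_{\mathrm{GL}(\mathbf V)}(\gamma)$ is the subgroup of $\mathrm{GL}(\mathbf V_{k^{\mathrm{sep}}})$ stabilising every $\mathcal L$-close eigenspace of $\gamma$. For Galois-stable $\mathcal L$, $C^{(\mathcal L)}_{\mathbf V}(\gamma)$ and $C^{(\mathcal L)}_{\mathbf G}(\gamma)$ are the $k$-descents of $C^{(\mathcal L)}_{\mathbf V_{k^{\mathrm{sep}}}}(\gamma)$ and of $\mathbf G_{k^{\mathrm{sep}}}\cap C^{(\mathcal L)}_{\mathrm{GL}(\mathbf V_{k^{\mathrm{sep}}})}(\gamma)$; $C^{(\mathcal L)}_{\mathbf G}(\gamma)$ depends only on $\mathbf G$, $\mathcal L$ and the automorphism of $\mathbf G$ induced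 by $\gamma$. $\mathrm{Cent}_{\mathbf G}(\gamma^n)$ is the scheme-theoretic centraliser. *)

(* Defs.v *)
From HB Require Import structures.
From mathcomp Require Import all_boot all_order all_algebra all_field.
From mathcomp Require Import mpoly.
Set Implicit Arguments. Unset Strict Implicit. Unset Printing Implicit Defensive.
Import Order.TTheory GRing.Theory Num.Theory.
Local Open Scope ring_scope.

Definition mxpow (R : comUnitRingType) d (A : 'M[R]_d) (m : nat) : 'M[R]_d :=
  iter m (mulmx A) 1%:M.

Definition mxpowz (R : comUnitRingType) d (A : 'M[R]_d) (n : int) : 'M[R]_d :=
  match n with
  | Posz m => mxpow A m
  | Negz m => mxpow (invmx A) m.+1
  end.

(* ---------- the affine group G inside GL_d, by its equations ----------
   G is a closed subgroup scheme of GL_d over k, cut out by the finite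
   family of polynomial equations [eqs] in the d*d matrix coefficients. *)
Definition Gpts (k : fieldType) d (eqs : seq {mpoly k[d * d]})
    (R : comUnitRingType) (f : k -> R) (A : 'M[R]_d) : Prop :=
  A \in unitmx /\ forall p, p \in eqs -> mmap f (fun i => mxvec A 0 i) p = 0.

Definition is_subgroup_scheme (k : fieldType) d (eqs : seq {mpoly k[d * d]}) :=
  forall (R : comUnitRingType) (f : {rmorphism k -> R}),
    [/\ Gpts eqs f 1%:M,
        forall A B, Gpts eqs f A -> Gpts eqs f B -> Gpts eqs f (A *m B)
      & forall A, Gpts eqs f A -> Gpts eqs f (invmx A)].

Definition normalises (k : fieldType) d (eqs : seq {mpoly k[d * d]})
    (gamma : 'M[k]_d) :=
  forall (R : comUnitRingType) (f : {rmorphism k -> R}) (A : 'M[R]_d),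
    Gpts eqs f A ->
    Gpts eqs f (map_mx f gamma *m A *m invmx (map_mx f gamma)).

Definition conj_trivial (k : fieldType) d (eqs : seq {mpoly k[d * d]})
    (gamma : 'M[k]_d) (m : nat) :=
  forall (R : comUnitRingType) (f : {rmorphism k -> R}) (A : 'M[R]_d),
    Gpts eqs f A ->
    mxpow (map_mx f gamma) m *m A *m invmx (mxpow (map_mx f gamma) m) = A.

Definition conj_order (k : fieldType) d (eqs : seq {mpoly k[d * d]})
    (gamma : 'M[k]_d) (N : nat) :=
  [/\ (0 < N)%N, conj_trivial eqs gamma N
    & forall m, (0 < m < N)%N -> ~ conj_trivial eqs gamma m].

Definition is_sep_closure (k K : fieldType) (iota : {rmorphism k -> K}) :=
  (forall p : {poly K}, (1 < size p)%N -> separable_poly p -> exists x, root p x)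
  /\ (forall x : K, exists p : {poly k},
        [/\ p != 0, separable_poly p & root (map_poly iota p) x]).

Definition is_mult_subgroup (K : fieldType) (L : K -> Prop) :=
  [/\ forall x, L x -> x != 0, L 1,
      forall x y, L x -> L y -> L (x * y)
    & forall x, L x -> L x^-1].

Definition gal_stable (k K : fieldType) (iota : {rmorphism k -> K})
    (L : K -> Prop) :=
  forall sigma : {rmorphism K -> K},
    (forall c, sigma (iota c) = iota c) -> bijective sigma ->
    forall x, L x -> L (sigma x).

Definition powgrp (K : fieldType) (L : K -> Prop) (n : int) : K -> Prop :=
  fun x => exists y, L y /\ x = y ^ n.

Definition mu (K : fieldType) (n : int) : K -> Prop :=
  fun x => x != 0 /\ x ^ n = 1.

Definition close_eigsp (K : fieldType) d (A : 'M[K]_d) (L : K -> Prop)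
    (lambda : K) (v : 'cV[K]_d) : Prop :=
  exists s : seq (K * 'cV[K]_d),
    (forall p, p \in s ->
       (exists l, L l /\ p.1 = lambda * l) /\ A *m p.2 = p.1 *: p.2)
    /\ v = \sum_(p <- s) p.2.

Definition CV (K : fieldType) d (A : 'M[K]_d) (L : K -> Prop) : 'cV[K]_d -> Prop :=
  close_eigsp A L 1.

(* R-points (R a commutative K-algebra via h) of C^(L)_{GL(V_K)}(A):
   invertible g stabilising R (x) W for every L-close eigenspace W of A. *)
Definition stab_close (K : fieldType) d (A : 'M[K]_d) (L : K -> Prop)
    (R : comUnitRingType) (h : K -> R) (g : 'M[R]_d) : Prop :=
  g \in unitmx /\
  forall lambda : K, lambda != 0 ->
    forall w, close_eigsp A L lambda w ->
      exists s : seq (R * 'cV[K]_d),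
        (forall p, p \in s -> close_eigsp A L lambda p.2) /\
        g *m map_mx h w = \sum_(p <- s) p.1 *: map_mx h p.2.

Definition CG (k K : fieldType) (iota : {rmorphism k -> K}) d
    (eqs : seq {mpoly k[d * d]}) (gamma : 'M[k]_d) (L : K -> Prop)
    (R : comUnitRingType) (h : {rmorphism K -> R}) (g : 'M[R]_d) : Prop :=
  Gpts eqs (h \o iota) g /\ stab_close (map_mx iota gamma) L h g.

Definition CentG (k K : fieldType) (iota : {rmorphism k -> K}) d
    (eqs : seq {mpoly k[d * d]}) (gamma : 'M[k]_d) (n : int)
    (R : comUnitRingType) (h : {rmorphism K -> R}) (g : 'M[R]_d) : Prop :=
  Gpts eqs (h \o iota) g /\
  g *m mxpowz (map_mx (h \o iota) gamma) n = mxpowz (map_mx (h \o iota) gamma) n *m g.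

(* Main.v *)
Require Import Defs.
From HB Require Import structures.
From mathcomp Require Import all_boot all_order all_algebra all_field.
From mathcomp Require Import mpoly.
From Stdlib Require Import ClassicalEpsilon Classical.
Import Order.TTheory GRing.Theory Num.Theory.
Local Open Scope ring_scope.
Set Implicit Arguments. Unset Strict Implicit.

Section RingLemmas.
Variable (R : comUnitRingType) (d : nat).

Lemma inv_uniq (A B : 'M[R]_d) : A *m B = 1%:M -> invmx A = B.
Proof.
move=> AB; have [uA _] := mulmx1_unit AB.
by rewrite -[invmx A]mulmx1 -AB mulmxA mulVmx // mul1mx.
Qed.

Variables (P Q : 'M[R]_d).
Hypotheses (PQ : P *m Q = 1%:M) (QP : Q *m P = 1%:M).

Lemma diag_one : diag_mx (\row_(i < d) (1 : R)) = 1%:M.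
Proof. by apply/matrixP=> i j; rewrite !mxE eq_sym. Qed.

Lemma mxpow_diag (e : 'rV[R]_d) m :
  mxpow (P *m diag_mx e *m Q) m = P *m diag_mx (\row_i e 0 i ^+ m) *m Q.
Proof.
elim: m => [|m IH].
  rewrite /mxpow /=.
  have -> : (\row_i e 0 i ^+ 0) = \row_(i < d) (1 : R) by apply/rowP=> i; rewrite !mxE.
  by rewrite diag_one mulmx1 PQ.
rewrite /mxpow /= -/(mxpow _ m) IH.
rewrite !mulmxA -[P *m diag_mx e *m Q *m P]mulmxA QP mulmx1.
rewrite -[P *m diag_mx e *m _]mulmxA mulmx_diag.
by congr (_ *m diag_mx _ *m _); apply/rowP=> i; rewrite !mxE exprS.
Qed.

Lemma mxpowz_diag (e : 'rV[R]_d) n :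
  (forall i, e 0 i \is a GRing.unit) ->
  mxpowz (P *m diag_mx e *m Q) n = P *m diag_mx (\row_i e 0 i ^ n) *m Q.
Proof.
move=> eu; case: n => m; rewrite /mxpowz.
  rewrite mxpow_diag; congr (_ *m diag_mx _ *m _); apply/rowP=> i; rewrite !mxE //.
have -> : invmx (P *m diag_mx e *m Q) = P *m diag_mx (\row_i (e 0 i)^-1) *m Q.
  apply: inv_uniq.
  rewrite !mulmxA -[P *m diag_mx e *m Q *m P]mulmxA QP mulmx1.
  rewrite -[P *m diag_mx e *m _]mulmxA mulmx_diag.
  have -> : (\row_j (e 0 j * (\row_i (e 0 i)^-1) 0 j)) = \row_(i < d) (1 : R).
    by apply/rowP=> i; rewrite !mxE mulrV.
  by rewrite diag_one mulmx1 PQ.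
rewrite mxpow_diag; congr (_ *m diag_mx _ *m _); apply/rowP=> i; rewrite !mxE.
by rewrite exprVn.
Qed.

Lemma comm_entries (e : 'rV[R]_d) (g : 'M[R]_d) :
  g *m (P *m diag_mx e *m Q) = (P *m diag_mx e *m Q) *m g <->
  forall i j, (Q *m g *m P) i j * e 0 j = e 0 i * (Q *m g *m P) i j.
Proof.
split=> H.
  have H2 : (Q *m g *m P) *m diag_mx e = diag_mx e *m (Q *m g *m P).
    have := congr1 (fun X => Q *m X *m P) H => /=.
    by rewrite !mulmxA -!(mulmxA _ Q P) QP !mulmx1 mul1mx.
  move=> i j; move/matrixP: H2 => /(_ i j).
  by rewrite mul_mx_diag mul_diag_mx !mxE.
have H2 : (Q *m g *m P) *m diag_mx e = diag_mx e *m (Q *m g *m P).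
  by apply/matrixP=> i j; rewrite mul_mx_diag mul_diag_mx mxE [in RHS]mxE; exact: H.
have := congr1 (fun X => P *m X *m Q) H2 => /=.
rewrite !mulmxA PQ mul1mx -!(mulmxA _ P Q) PQ mulmx1.
by [].
Qed.

End RingLemmas.

Definition xdec (Pr : Prop) : bool :=
  if excluded_middle_informative Pr then true else false.
Lemma xdecP (Pr : Prop) : reflect Pr (xdec Pr).
Proof. by rewrite /xdec; case: excluded_middle_informative => H; constructor. Qed.
Arguments xdecP Pr : clear implicits.

Definition Rel {K : fieldType} (Lp : K -> Prop) (a b : K) := exists l, Lp l /\ b = a * l.

Section Eig.
Variables (K : fieldType) (d : nat) (P Q : 'M[K]_d) (dl : 'rV[K]_d).
Hypotheses (PQ : P *m Q = 1%:M) (QP : Q *m P = 1%:M).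
Let M := P *m diag_mx dl *m Q.

Lemma eig_col i : M *m (P *m (delta_mx i 0 : 'cV_d)) = dl 0 i *: (P *m (delta_mx i 0 : 'cV_d)).
Proof.
rewrite /M -!mulmxA (mulmxA Q) QP mul1mx mul_diag_mx scalemxAr; congr (P *m _).
by apply/matrixP=> a b; rewrite !mxE; case: (eqVneq a i) => [->|]; rewrite ?mulr0 ?mulr1.
Qed.

Lemma closeE Lp lam w : close_eigsp M Lp lam w ->
  forall i, ~ Rel Lp lam (dl 0 i) -> (Q *m w) i 0 = 0.
Proof.
move=> [s [Hs ->]] i nR; rewrite mulmx_sumr summxE big1_seq // => p /andP[_ ps].
have [[l [Ll e1]] Hp] := Hs p ps.
have E : dl 0 i * (Q *m p.2) i 0 = p.1 * (Q *m p.2) i 0.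
  have := congr1 (mulmx Q) Hp; rewrite -scalemxAr /M !mulmxA QP mul1mx.
  move/matrixP=> /(_ i 0); rewrite -mulmxA mul_diag_mx !mxE => ->.
  by [].
case: (eqVneq ((Q *m p.2) i 0) 0) => // nz.
by exfalso; apply: nR; exists l; split=> //; rewrite -e1; exact: (mulIf nz E).
Qed.

Lemma closeI (Lp : K -> Prop) lam w : Lp 1 ->
  (forall i, ~ Rel Lp lam (dl 0 i) -> (Q *m w) i 0 = 0) -> close_eigsp M Lp lam w.
Proof.
move=> L1 H.
exists [seq if xdec (Rel Lp lam (dl 0 i)) then (dl 0 i, (Q *m w) i 0 *: (P *m (delta_mx i 0 : 'cV_d)))
            else (lam, 0) | i <- index_enum 'I_d]; split.
  move=> p /mapP [i _ ->]; case: xdecP => [[l [Ll El]]|_] /=.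
    split; first by exists l.
    by rewrite -scalemxAr eig_col !scalerA mulrC.
  by split; [exists 1; rewrite mulr1 | rewrite mulmx0 scaler0].
have Ew : w = \sum_(i < d) (Q *m w) i 0 *: (P *m (delta_mx i 0 : 'cV_d)).
  rewrite -[LHS]mul1mx -PQ -mulmxA {1}[Q *m w]matrix_sum_delta mulmx_sumr.
  by apply: eq_bigr => i _; rewrite big_ord1 -scalemxAr.
rewrite big_map {1}Ew; apply: eq_bigr => i _; case: xdecP => //= nR.
by rewrite H // scale0r.
Qed.

End Eig.

Section Stab.
Variables (K : fieldType) (d : nat) (P Q : 'M[K]_d) (dl : 'rV[K]_d).
Hypotheses (PQ : P *m Q = 1%:M) (QP : Q *m P = 1%:M).
Variables (R : comUnitRingType) (h : {rmorphism K -> R}).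
Let M := P *m diag_mx dl *m Q.

Lemma stabE (Lp : K -> Prop) (g : 'M[R]_d) : Lp 1 -> (forall i, dl 0 i != 0) ->
  stab_close M Lp h g -> forall i j, ~ Rel Lp (dl 0 j) (dl 0 i) ->
  (map_mx h Q *m g *m map_mx h P) i j = 0.
Proof.
move=> L1 nz [gu Hst] i j nR.
have Hw : close_eigsp M Lp (dl 0 j) (P *m (delta_mx j 0 : 'cV_d)).
  apply: closeI => // i' nR'; rewrite mulmxA QP mul1mx mxE.
  have [E|ne] := eqVneq i' j; last by [].
  by exfalso; apply: nR'; rewrite E; exists 1; rewrite mulr1.
have [s [Hs Eg]] := Hst _ (nz j) _ Hw.
have <- : ((map_mx h Q *m g *m map_mx h P) *m (delta_mx j 0 : 'cV_d)) i 0
   = (map_mx h Q *m g *m map_mx h P) i j by rewrite -colE mxE.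
rewrite -!mulmxA -(map_delta_mx h) -map_mxM Eg mulmx_sumr summxE.
rewrite big1_seq // => p /andP[_ ps].
rewrite -scalemxAr -map_mxM mxE mxE.
by rewrite (closeE QP (Hs p ps)) ?rmorph0 ?mulr0.
Qed.

Lemma stabI (Lp : K -> Prop) (g : 'M[R]_d) : g \in unitmx -> Lp 1 ->
  (forall a b c, Rel Lp a b -> Rel Lp b c -> Rel Lp a c) ->
  (forall i j, ~ Rel Lp (dl 0 j) (dl 0 i) -> (map_mx h Q *m g *m map_mx h P) i j = 0) ->
  stab_close M Lp h g.
Proof.
move=> gu L1 tr HX; split=> // lam _ w Hw.
set c := (map_mx h Q *m g *m map_mx h P) *m map_mx h (Q *m w).
exists [seq (c i 0, if xdec (Rel Lp lam (dl 0 i)) then P *m (delta_mx i 0 : 'cV_d) else 0)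
         | i <- index_enum 'I_d]; split.
  move=> p /mapP[i _ ->] /=; case: (xdecP (Rel Lp lam (dl 0 i))) => R1.
    apply: closeI => // i' nR'; rewrite mulmxA QP mul1mx mxE.
    have [E|ne] := eqVneq i' i; last by [].
    by exfalso; apply: nR'; rewrite E.
  by apply: closeI => // i' _; rewrite mulmx0 mxE.
have Egc : g *m map_mx h w = map_mx h P *m c.
  rewrite /c !mulmxA -map_mxM PQ map_mx1 mul1mx -!mulmxA -!map_mxM.
  by rewrite mulmxA PQ mul1mx.
rewrite big_map Egc {1}[c]matrix_sum_delta mulmx_sumr; apply: eq_bigr => i _.
rewrite big_ord1 -scalemxAr.
case: (xdecP (Rel Lp lam (dl 0 i))) => R1 /=; first by rewrite map_mxM map_delta_mx.
have -> : c i 0 = 0.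
  rewrite /c mxE big1 // => j _; rewrite [X in _ * X]mxE.
  case: (classic (Rel Lp lam (dl 0 j))) => Rj.
    by rewrite HX ?mul0r // => Rji; apply: R1; exact: tr Rj Rji.
  by rewrite (closeE QP Hw Rj) rmorph0 mulr0.
by rewrite !scale0r.
Qed.

End Stab.

Lemma diag_unit_nz (F : fieldType) d (dl : 'rV[F]_d) :
  diag_mx dl \in unitmx -> forall i, dl 0 i != 0.
Proof.
rewrite unitmxE det_diag unitfE => H i; apply: contraNneq H => e.
by apply/eqP; rewrite (bigD1 i) //= e mul0r.
Qed.

Lemma map_mxpow (F : fieldType) (S : comUnitRingType) (f : {rmorphism F -> S}) d
  (B : 'M[F]_d) m : map_mx f (mxpow B m) = mxpow (map_mx f B) m.
Proof.
elim: m => [|m IH]; first by rewrite /mxpow /= map_mx1.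
by rewrite /mxpow /= -/(mxpow B m) -/(mxpow _ m) map_mxM IH.
Qed.

Lemma map_mxpowz (F : fieldType) (S : comUnitRingType) (f : {rmorphism F -> S}) d
  (B : 'M[F]_d) n : map_mx f (mxpowz B n) = mxpowz (map_mx f B) n.
Proof. by case: n => m; rewrite /mxpowz map_mxpow ?map_invmx. Qed.

Lemma cancel_h (K : fieldType) (R : comUnitRingType) (h : {rmorphism K -> R})
  (x : R) a b : x * h a = h b * x -> a != b -> x = 0.
Proof.
move=> E ne.
have E2 : x * h (a - b) = 0 by rewrite rmorphB mulrBr E mulrC subrr.
have hu : h (a - b) \is a GRing.unit by rewrite fmorph_unit subr_eq0.
by rewrite -(mulrK hu x) E2 mul0r.
Qed.

Section RelLemmas.
Variables (K : fieldType) (L : K -> Prop).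
Hypothesis HL : is_mult_subgroup L.

Lemma rel_trans a b c : Rel L a b -> Rel L b c -> Rel L a c.
Proof.
case: HL => _ _ Hm _ [l1 [L1 ->]] [l2 [L2 ->]].
by exists (l1 * l2); split; [exact: Hm | rewrite mulrA].
Qed.

Lemma pow1 n : powgrp L n 1.
Proof. by case: HL => _ L1 _ _; exists 1; rewrite exp1rz. Qed.

Lemma pow_trans n a b c : Rel (powgrp L n) a b -> Rel (powgrp L n) b c ->
  Rel (powgrp L n) a c.
Proof.
case: HL => _ _ Hm _ [l1 [[y1 [Y1 ->]] ->]] [l2 [[y2 [Y2 ->]] ->]].
exists ((y1 * y2) ^ n); split; first by exists (y1 * y2); split => //; exact: Hm.
by rewrite expfzMl mulrA.
Qed.

Lemma rel_pow n a b : Rel L a b -> Rel (powgrp L n) (a ^ n) (b ^ n).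
Proof.
move=> [l [Ll ->]]; exists (l ^ n); split; first by exists l.
by rewrite expfzMl.
Qed.

Lemma rel_pow_inv n a b : (forall x, mu n x -> L x) -> a != 0 -> b != 0 ->
  Rel (powgrp L n) (a ^ n) (b ^ n) -> Rel L a b.
Proof.
case: HL => Hnz _ Hm _ Hmu an bn [l [[y [Ly ->]] E]].
have yn := Hnz _ Ly.
have ayn : a * y != 0 by rewrite mulf_neq0.
have Lz : L (b / (a * y)).
  apply: Hmu; split; first by rewrite mulf_neq0 // invr_eq0.
  rewrite expfzMl -expfV expfzMl E mulfV //.
  by rewrite mulf_neq0 // expfz_neq0.
exists (y * (b / (a * y))); split; first exact: Hm.
by rewrite mulrA mulrC divfK.
Qed.

End RelLemmas.
Unset Implicit Arguments. Set Strict Implicit.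
Theorem lemma4p11
  (k K : fieldType) (iota : {rmorphism k -> K}) (d : nat)
  (eqs : seq {mpoly k[d * d]}) (gamma : 'M[k]_d) (L : K -> Prop)
  (HK : is_sep_closure iota)
  (HG : is_subgroup_scheme eqs)
  (Hgu : gamma \in unitmx)
  (HN : normalises eqs gamma)
  (Hdiag : exists P : 'M[K]_d,
      P \in unitmx /\ is_diag_mx (invmx P *m map_mx iota gamma *m P))
  (HL : is_mult_subgroup L)
  (HLgal : gal_stable iota L) :
  (forall n : int,
     [/\ (forall v, CV (map_mx iota gamma) L v ->
                    CV (mxpowz (map_mx iota gamma) n) (powgrp L n) v),
         (forall (R : comUnitRingType) (h : {rmorphism K -> R}) (g : 'M[R]_d),
            CG iota eqs gamma L h g ->
            CG iota eqs (mxpowz gamma n) (powgrp L n) h g)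
       & (forall x, mu n x -> L x) ->
         (forall v, CV (map_mx iota gamma) L v <->
                    CV (mxpowz (map_mx iota gamma) n) (powgrp L n) v) /\
         (forall (R : comUnitRingType) (h : {rmorphism K -> R}) (g : 'M[R]_d),
            CG iota eqs gamma L h g <->
            CG iota eqs (mxpowz gamma n) (powgrp L n) h g)])
  /\
  (forall (N : nat) (n : int),
     conj_order eqs gamma N ->
     (forall x, mu (N%:Z) x -> L x -> mu n x) ->
     (forall x, mu n x -> L x) ->
     forall (R : comUnitRingType) (h : {rmorphism K -> R}) (g : 'M[R]_d),
       CentG iota eqs gamma n h g <-> CG iota eqs gamma L h g).
Proof.
have [P [Pu Hd]] := Hdiag.
set A := map_mx iota gamma in Hd *.
set Q := invmx P in Hd *.
have PQ : P *m Q = 1%:M by rewrite mulmxV.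
have QP : Q *m P = 1%:M by rewrite mulVmx.
have [dl Ddl] := diag_mxP _ Hd.
have EA : A = P *m diag_mx dl *m Q.
  by rewrite -Ddl !mulmxA PQ mul1mx -mulmxA PQ mulmx1.
have Au : A \in unitmx by rewrite map_unitmx.
have nz : forall i, dl 0 i != 0.
  by apply: diag_unit_nz; rewrite -Ddl !unitmx_mul Au Pu unitmx_inv Pu.
have EAn : forall n, mxpowz A n = P *m diag_mx (\row_i dl 0 i ^ n) *m Q.
  by move=> n; rewrite {1}EA (mxpowz_diag PQ QP) // => i; rewrite unitfE.
have L1 : L 1 by case: HL.
have hunit : forall (R : comUnitRingType) (h : {rmorphism K -> R}) i,
    h (dl 0 i) \is a GRing.unit by move=> R h i; rewrite fmorph_unit.
have EARn : forall (R : comUnitRingType) (h : {rmorphism K -> R}) n,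
    mxpowz (map_mx (h \o iota) gamma) n =
    map_mx h P *m diag_mx (\row_i h (dl 0 i ^ n)) *m map_mx h Q.
  move=> R h n; rewrite map_mx_comp -/A EA !map_mxM map_diag_mx.
  rewrite (mxpowz_diag (P := map_mx h P) (Q := map_mx h Q)).
  - by congr (_ *m diag_mx _ *m _); apply/rowP=> i; rewrite !mxE rmorphXz // unitfE.
  - by rewrite -map_mxM PQ map_mx1.
  - by rewrite -map_mxM QP map_mx1.
  - by move=> i; rewrite mxE hunit.
have PQh : forall (R : comUnitRingType) (h : {rmorphism K -> R}),
    map_mx h P *m map_mx h Q = 1%:M by move=> R h; rewrite -map_mxM PQ map_mx1.
have QPh : forall (R : comUnitRingType) (h : {rmorphism K -> R}),
    map_mx h Q *m map_mx h P = 1%:M by move=> R h; rewrite -map_mxM QP map_mx1.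
have P1a : forall n v, CV A L v -> CV (mxpowz A n) (powgrp L n) v.
  move=> n v; rewrite /CV EAn {1}EA => Hv.
  apply: (closeI PQ QP (pow1 HL n)) => i nR.
  apply: (closeE QP Hv) => R1; apply: nR; rewrite mxE -(exp1rz _ n).
  exact: rel_pow.
have P1b : forall n (R : comUnitRingType) (h : {rmorphism K -> R}) g,
    CG iota eqs gamma L h g -> CG iota eqs (mxpowz gamma n) (powgrp L n) h g.
  move=> n R h g [Gg Hs]; split=> //.
  rewrite map_mxpowz -/A EAn; rewrite -/A EA in Hs.
  apply: (stabI PQ QP Hs.1 (pow1 HL n) (@pow_trans _ _ HL n)) => i j nR.
  apply: (stabE PQ QP L1 nz Hs) => R1; apply: nR; rewrite !mxE.
  exact: rel_pow.
split.
  move=> n; split; [exact: P1a | exact: P1b | move=> Hmu; split].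
    move=> v; split; first exact: P1a.
    rewrite /CV EAn EA => Hv.
    apply: (closeI PQ QP L1) => i nR.
    apply: (closeE QP Hv) => R1; apply: nR; rewrite mxE -(exp1rz _ n) in R1.
    exact: (rel_pow_inv HL Hmu (oner_neq0 _) (nz i) R1).
  move=> R h g; split; first exact: P1b.
  move=> [Gg Hs]; split=> //.
  rewrite map_mxpowz -/A EAn in Hs; rewrite -/A EA.
  apply: (stabI PQ QP Hs.1 L1 (rel_trans HL)) => i j nR.
  apply: (stabE PQ QP (pow1 HL n) _ Hs) => [i'|R1]; first by rewrite mxE expfz_neq0.
  apply: nR; rewrite !mxE in R1.
  exact: (rel_pow_inv HL Hmu (nz j) (nz i) R1).
move=> N n [Npos Ntriv _] HmuN Hmun R h g.
have key : forall g, Gpts eqs (h \o iota) g -> forall i j,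
    dl 0 i ^ (N%:Z) != dl 0 j ^ (N%:Z) ->
    (map_mx h Q *m g *m map_mx h P) i j = 0.
  move=> g' Gg i j ne.
  have E := Ntriv R (h \o iota) g' Gg.
  set M := mxpow _ N in E.
  have Mu : M \in unitmx.
    have Gu : map_mx (h \o iota) gamma \in unitmx by rewrite map_unitmx.
    rewrite /M; elim: (N) => [|m IH]; first by rewrite /mxpow /= unitmx1.
    by rewrite /mxpow /= -/(mxpow _ m) unitmx_mul Gu IH.
  have C : g' *m M = M *m g' by rewrite -{1}E -mulmxA mulVmx ?mulmx1.
  have : g' *m mxpowz (map_mx (h \o iota) gamma) (N%:Z) =
         mxpowz (map_mx (h \o iota) gamma) (N%:Z) *m g' by [].
  rewrite EARn => /(comm_entries (PQh R h) (QPh R h)) /(_ i j).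
  rewrite !mxE => C2.
  by apply: (cancel_h C2); rewrite eq_sym.
split.
  move=> [Gg Hc]; split=> //; rewrite -/A EA.
  apply: (stabI PQ QP Gg.1 L1 (rel_trans HL)) => i j nR.
  move: Hc; rewrite EARn => /(comm_entries (PQh R h) (QPh R h)) /(_ i j).
  rewrite !mxE => C2; apply: (cancel_h C2); apply/eqP => E; apply: nR.
  exists (dl 0 i / dl 0 j); split; last by rewrite mulrC divfK.
  apply: Hmun; split; first by rewrite mulf_neq0 // invr_eq0.
  by rewrite expfzMl -expfV E mulfV // expfz_neq0.
move=> [Gg Hs]; split=> //; rewrite -/A EA in Hs.
rewrite EARn; apply/(comm_entries (PQh R h) (QPh R h)) => i j.
set X := (map_mx h Q *m g *m map_mx h P) i j; rewrite !mxE.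
case: (eqVneq (dl 0 i ^ n) (dl 0 j ^ n)) => [->|ne]; first by rewrite mulrC.
case: (eqVneq (dl 0 i ^ (N%:Z)) (dl 0 j ^ (N%:Z))) => [eN|neN]; last first.
  by rewrite /X (key g Gg i j neN) mul0r mulr0.
case: (classic (Rel L (dl 0 j) (dl 0 i))) => Rji; last first.
  by rewrite /X (stabE PQ QP L1 nz Hs Rji) mul0r mulr0.
exfalso; move: Rji => [l [Ll El]].
have ln : l != 0 by case: HL => Hnz _ _ _; exact: Hnz.
have lN : l ^ (N%:Z) = 1.
  apply: (mulfI (expfz_neq0 (N%:Z) (nz j))); rewrite mulr1 -expfzMl -El.
  by rewrite eN.
have [_ ln1] := HmuN l (conj ln lN) Ll.
by move/eqP: ne; apply; rewrite El expfzMl ln1 mulr1.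
Qed.
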